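(* Let $n,k\in\mathbb N$ and let $G=(V,E)$ be a connected $n$-quasitransitive graph with all degrees at most $k$. Then there exist a connected vertex-transitive graph $G'=(V',E')$ with all degrees at most $(k+1)^{2n}$ and $\operatorname{diam}(G')\le\operatorname{diam}(G)$, and an injective $(2n,n)$-rough isometry $G'\to G$ (i.e. from $V'$ to $V$). Moreover, if $G$ is finite then one may additionally require $|V|/n\le|V'|\le|V|$.
   Context: $G$ is $n$-quasitransitive if $\mathrm{Aut}(G)$ acting on $V$ has at most $n$ orbits. With $d$ the graph distance on each graph, a map $\phi:V'\to V$ is an $(\alpha,\beta)$-rough isometry if $\alpha^{-1}d(x,y)-\beta\le d(\phi(x),\phi(y))\le\alpha d(x,y)+\beta$ for all $x,y\in V'$, and for every $y\in V$ there is $x\in V'$ with $d(\phi(x),y)\le\beta$. *)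

(* Defs.v *)
From Stdlib Require Import Reals List ClassicalEpsilon.
Import ListNotations.
Open Scope R_scope.

Definition simple_graph (V : Type) (adj : V -> V -> Prop) : Prop :=
  (forall x y, adj x y -> adj y x) /\ (forall x, ~ adj x x).

Inductive walk {V : Type} (adj : V -> V -> Prop) : V -> V -> nat -> Prop :=
| walk0 : forall x, walk adj x x 0
| walkS : forall x y z m, adj x y -> walk adj y z m -> walk adj x z (S m).

Definition connected (V : Type) (adj : V -> V -> Prop) : Prop :=
  inhabited V /\ forall x y : V, exists m, walk adj x y m.

(* Graph distance: the least length of a walk (meaningful for connected graphs). *)
Definition gdist {V : Type} (adj : V -> V -> Prop) (x y : V) : nat :=
  epsilon (inhabits 0%nat)
    (fun d => walk adj x y d /\ forall m, walk adj x y m -> (d <= m)%nat).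

Definition max_degree_le (V : Type) (adj : V -> V -> Prop) (k : nat) : Prop :=
  forall v : V, exists l : list V, (length l <= k)%nat /\
    forall w, adj v w -> In w l.

Definition automorphism (V : Type) (adj : V -> V -> Prop) (f : V -> V) : Prop :=
  (exists g : V -> V, (forall x, g (f x) = x) /\ (forall x, f (g x) = x)) /\
  (forall x y, adj x y <-> adj (f x) (f y)).

(* n-quasitransitive: Aut(G) acting on V has at most n orbits, i.e. there are
   at most n vertices whose orbits cover V. *)
Definition quasitransitive (V : Type) (adj : V -> V -> Prop) (n : nat) : Prop :=
  exists reps : list V, (length reps <= n)%nat /\
    forall v : V, exists r f, In r reps /\ automorphism V adj f /\ f r = v.

Definition vertex_transitive (V : Type) (adj : V -> V -> Prop) : Prop :=
  forall x y : V, exists f, automorphism V adj f /\ f x = y.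

(* diam(G') <= diam(G) in the extended naturals. *)
Definition diam_le (V' : Type) (adj' : V' -> V' -> Prop)
  (V : Type) (adj : V -> V -> Prop) : Prop :=
  forall m : nat, (forall x y : V, (gdist adj x y <= m)%nat) ->
    forall x' y' : V', (gdist adj' x' y' <= m)%nat.

Definition rough_isometry (V' : Type) (adj' : V' -> V' -> Prop)
  (V : Type) (adj : V -> V -> Prop) (alpha beta : R) (phi : V' -> V) : Prop :=
  (forall x y : V',
     / alpha * INR (gdist adj' x y) - beta <= INR (gdist adj (phi x) (phi y)) /\
     INR (gdist adj (phi x) (phi y)) <= alpha * INR (gdist adj' x y) + beta) /\
  (forall y : V, exists x : V', INR (gdist adj (phi x) y) <= beta).

Definition has_card (V : Type) (c : nat) : Prop :=
  exists l : list V, NoDup l /\ (forall x, In x l) /\ length l = c.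

(* Main.v *)
Require Import Defs.
From Stdlib Require Import Reals List Lia Classical ClassicalEpsilon ProofIrrelevance Arith Lra Psatz.
Import ListNotations.
Open Scope R_scope.

Lemma least_ex (P : nat -> Prop) : (exists m, P m) ->
  exists m, P m /\ forall m', P m' -> (m <= m')%nat.
Proof.
  intros [m Hm]. revert Hm. induction m as [m IH] using lt_wf_ind. intros Hm.
  destruct (classic (exists m', (m' < m)%nat /\ P m')) as [[m' [Hlt Hm']]|Hno].
  - exact (IH m' Hlt Hm').
  - exists m. split; auto. intros m' Hm'. destruct (le_lt_dec m m'); auto.
    exfalso; apply Hno; eauto.
Qed.

Lemma gdist_spec {V} (adj : V -> V -> Prop) x y m : walk adj x y m ->
  walk adj x y (gdist adj x y) /\ (gdist adj x y <= m)%nat.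
Proof.
  intros Hw. unfold gdist.
  destruct (least_ex (fun d => walk adj x y d) (ex_intro _ m Hw)) as [d Hd].
  destruct (epsilon_spec (inhabits 0%nat)
    (fun d => walk adj x y d /\ forall m, walk adj x y m -> (d <= m)%nat)
    (ex_intro _ d Hd)) as [H1 H2].
  split; auto.
Qed.

Lemma walk_app {V} (adj : V -> V -> Prop) x y z m1 m2 :
  walk adj x y m1 -> walk adj y z m2 -> walk adj x z (m1 + m2).
Proof.
  intros H1; induction H1; intros H2; simpl; [exact H2|].
  econstructor; eauto.
Qed.

Lemma walk_rev {V} (adj : V -> V -> Prop) x y m :
  (forall a b, adj a b -> adj b a) -> walk adj x y m -> walk adj y x m.
Proof.
  intros Hs H; induction H. constructor.
  replace (S m) with (m + 1)%nat by lia. eapply walk_app; eauto.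
  econstructor; [apply Hs; eauto| constructor].
Qed.

Lemma walk_aut {V} (adj : V -> V -> Prop) f x y m :
  automorphism V adj f -> walk adj x y m -> walk adj (f x) (f y) m.
Proof.
  intros [_ Ha] H; induction H. constructor.
  apply walkS with (f y); [apply (proj1 (Ha x y)); exact H| exact IHwalk].
Qed.

Lemma aut_id V adj : automorphism V adj (fun x => x).
Proof. split. exists (fun x => x); split; reflexivity. intros; tauto. Qed.

Lemma aut_comp V adj f g : automorphism V adj f -> automorphism V adj g ->
  automorphism V adj (fun x => f (g x)).
Proof.
  intros [[fi [Hf1 Hf2]] Hfa] [[gi [Hg1 Hg2]] Hga]. split.
  - exists (fun x => gi (fi x)). split; intros x. rewrite Hf1; auto. rewrite Hg2; auto.
  - intros x y. rewrite Hga, Hfa. tauto.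
Qed.

Lemma aut_inv V adj f : automorphism V adj f -> exists g,
  automorphism V adj g /\ (forall x, g (f x) = x) /\ (forall x, f (g x) = x).
Proof.
  intros [[g [H1 H2]] Ha]. exists g. split; [|split; auto].
  split. exists f; split; auto.
  intros x y. split; intros H.
  - apply Ha. rewrite !H2. auto.
  - apply Ha in H. rewrite !H2 in H. auto.
Qed.

Lemma walk_aut_iff {V} (adj : V -> V -> Prop) f x y m :
  automorphism V adj f -> (walk adj x y m <-> walk adj (f x) (f y) m).
Proof.
  intros Hf. split. apply walk_aut; auto.
  destruct (aut_inv _ _ _ Hf) as [g [Hg [Hgf _]]].
  intros H. apply (walk_aut _ g) in H; auto. rewrite !Hgf in H; auto.
Qed.

Fixpoint ball {V} (nb : V -> list V) (m : nat) (v : V) : list V :=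
  match m with 0 => [v] | S m' => v :: flat_map (ball nb m') (nb v) end.

Lemma ball_len {V} (nb : V -> list V) k : (forall v, (length (nb v) <= k)%nat) ->
  forall m v, (length (ball nb m v) <= (k+1)^m)%nat.
Proof.
  intros Hk. induction m; intros v; simpl. lia.
  assert (Hl : forall l, (length (flat_map (ball nb m) l) <= length l * (k+1)^m)%nat).
  { induction l as [|a l IHl]; simpl. lia. rewrite length_app. specialize (IHm a). lia. }
  specialize (Hl (nb v)). specialize (Hk v).
  assert (1 <= (k+1)^m)%nat by (apply Nat.neq_0_lt_0, Nat.pow_nonzero; lia).
  nia.
Qed.

Lemma ball_in {V} (adj : V -> V -> Prop) (nb : V -> list V) :
  (forall v w, adj v w -> In w (nb v)) ->
  forall m v w j, walk adj v w j -> (j <= m)%nat -> In w (ball nb m v).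
Proof.
  intros Hnb m. induction m; intros v w j Hw Hj.
  - destruct Hw. simpl; auto. lia.
  - destruct Hw as [x|x y z m0 Hxy Hw]. simpl; auto.
    simpl. right. apply in_flat_map. exists y. split; auto. eapply IHm; eauto. lia.
Qed.

Fixpoint sub_list {V} (P : V -> Prop) (l : list V) : list {v | P v} :=
  match l with
  | [] => []
  | x :: t => match excluded_middle_informative (P x) with
              | left p => exist P x p :: sub_list P t
              | right _ => sub_list P t end
  end.

Lemma sig_ext {A} {P : A -> Prop} (a b : {x | P x}) : proj1_sig a = proj1_sig b -> a = b.
Proof. destruct a, b; simpl; intros ->; f_equal; apply proof_irrelevance. Qed.

Lemma sub_list_in {V} (P : V -> Prop) l (x : {v | P v}) :
  In (proj1_sig x) l -> In x (sub_list P l).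
Proof.
  induction l; simpl; intros H; [contradiction|].
  destruct (excluded_middle_informative (P a)) as [p|np].
  - destruct H as [H|H]. left. apply sig_ext; simpl; auto. right; auto.
  - destruct H as [H|H]. destruct x; simpl in *; subst; contradiction. auto.
Qed.

Lemma sub_list_in_inv {V} (P : V -> Prop) l (x : {v | P v}) :
  In x (sub_list P l) -> In (proj1_sig x) l.
Proof.
  induction l; simpl; intros H; [contradiction|].
  destruct (excluded_middle_informative (P a)) as [p|np].
  - destruct H as [H|H]. subst; simpl; auto. auto.
  - auto.
Qed.

Lemma sub_list_len {V} (P : V -> Prop) (l : list V) : (length (sub_list P l) <= length l)%nat.
Proof. induction l; simpl; [lia|]. destruct (excluded_middle_informative (P a)); simpl; lia. Qed.

Lemma sub_list_nodup {V} (P : V -> Prop) (l : list V) : NoDup l -> NoDup (sub_list P l).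
Proof.
  induction 1; simpl; [constructor|].
  destruct (excluded_middle_informative (P x)); auto. constructor; auto.
  intros Hin. apply sub_list_in_inv in Hin. simpl in Hin. contradiction.
Qed.

Lemma sub_list_cons_len {V} (P : V -> Prop) x t :
  length (sub_list P (x::t)) =
  ((if excluded_middle_informative (P x) then 1 else 0) + length (sub_list P t))%nat.
Proof. simpl; destruct (excluded_middle_informative (P x)); reflexivity. Qed.

Lemma sub_mono {V} (P Q : V -> Prop) l : (forall x, P x -> Q x) ->
  (length (sub_list P l) <= length (sub_list Q l))%nat.
Proof.
  intros H; induction l; [simpl; lia|].
  rewrite !sub_list_cons_len.
  destruct (excluded_middle_informative (P a)), (excluded_middle_informative (Q a));
    try lia. exfalso; eauto.
Qed.

Lemma sub_strict {V} (P Q : V -> Prop) l r : (forall x, P x -> Q x) ->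
  In r l -> Q r -> ~ P r -> (length (sub_list P l) < length (sub_list Q l))%nat.
Proof.
  intros H; induction l; [simpl; contradiction|]. intros Hin Hq Hp.
  rewrite !sub_list_cons_len.
  pose proof (sub_mono P Q l H).
  destruct Hin as [->|Hin].
  - destruct (excluded_middle_informative (P r)), (excluded_middle_informative (Q r));
      try contradiction; lia.
  - specialize (IHl Hin Hq Hp).
    destruct (excluded_middle_informative (P a)), (excluded_middle_informative (Q a));
      try lia. exfalso; eauto.
Qed.

Lemma sub_full {V} (P : V -> Prop) l : length (sub_list P l) = length l ->
  forall x, In x l -> P x.
Proof.
  induction l; [simpl; contradiction|]. rewrite sub_list_cons_len. simpl length.
  pose proof (sub_list_len P l).
  destruct (excluded_middle_informative (P a)); intros Hl x [->|Hx]; auto; lia.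
Qed.

Lemma list_sum_map_add {V} (f g : V -> nat) l :
  list_sum (map (fun r => f r + g r)%nat l) = (list_sum (map f l) + list_sum (map g l))%nat.
Proof. induction l; simpl; lia. Qed.

Lemma le_list_sum {V} (f : V -> nat) l r : In r l -> (f r <= list_sum (map f l))%nat.
Proof. induction l; simpl; [contradiction|]. intros [->|H]; [lia|]. specialize (IHl H); lia. Qed.

Lemma list_sum_le_max {V} (f : V -> nat) l : l <> [] ->
  exists r, In r l /\ (list_sum (map f l) <= length l * f r)%nat.
Proof.
  induction l as [|a t IH]; intros Hne; [congruence|].
  destruct t as [|b t].
  - exists a; simpl; split; auto; lia.
  - destruct IH as [r' [Hr' Hs]]. congruence.
    destruct (le_lt_dec (f a) (f r')).
    + exists r'. split; [right; auto|]. simpl in *. nia.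
    + exists a. split; [left; auto|]. simpl in *. nia.
Qed.

Lemma count_cover {V} (Q : V -> V -> Prop) (reps l : list V) :
  (forall x, In x l -> exists r, In r reps /\ Q r x) ->
  (length l <= list_sum (map (fun r => length (sub_list (Q r) l)) reps))%nat.
Proof.
  induction l as [|x t IH]; intros H; simpl; [lia|].
  erewrite map_ext; [|intros r; apply sub_list_cons_len].
  rewrite list_sum_map_add.
  destruct (H x (or_introl eq_refl)) as [r [Hr Hq]].
  pose proof (le_list_sum (fun r => if excluded_middle_informative (Q r x) then 1 else 0)%nat reps r Hr) as Hle.
  simpl in Hle. destruct (excluded_middle_informative (Q r x)); [|contradiction].
  specialize (IH (fun y Hy => H y (or_intror Hy))). lia.
Qed.

Lemma card_uniq {T} (l1 l2 : list T) : NoDup l1 -> NoDup l2 ->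
  (forall x, In x l1) -> (forall x, In x l2) -> length l1 = length l2.
Proof.
  intros N1 N2 F1 F2. apply Nat.le_antisymm; apply NoDup_incl_length; auto; intros x _; auto.
Qed.

Definition orb {V} (adj : V -> V -> Prop) (r v : V) : Prop :=
  exists f, automorphism V adj f /\ f r = v.

Lemma orb_aut {V} (adj : V -> V -> Prop) r h v :
  automorphism V adj h -> orb adj r v -> orb adj r (h v).
Proof.
  intros Hh [f [Hf Hr]]. exists (fun x => h (f x)). split. apply aut_comp; auto.
  simpl; rewrite Hr; auto.
Qed.

Definition Dj {V} (adj : V -> V -> Prop) (r : V) (j : nat) (v : V) : Prop :=
  exists u a, orb adj r u /\ (a <= j)%nat /\ walk adj v u a.

Lemma Dj_aut {V} (adj : V -> V -> Prop) r j f v :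
  automorphism V adj f -> Dj adj r j v -> Dj adj r j (f v).
Proof.
  intros Hf [u [a [Hu [Ha Hw]]]]. exists (f u), a. split. apply orb_aut; auto.
  split; auto. apply walk_aut; auto.
Qed.

Lemma find_new {V} (adj : V -> V -> Prop) r j : forall w u m, walk adj w u m ->
  orb adj r u -> ~ Dj adj r j w -> exists v, Dj adj r (S j) v /\ ~ Dj adj r j v.
Proof.
  induction 1 as [x|x y z m Hxy Hw IH]; intros Hu Hn.
  - exfalso; apply Hn. exists x, 0%nat. split; auto. split; [lia|constructor].
  - destruct (classic (Dj adj r j y)) as [Hy|Hy].
    + exists x. split; auto. destruct Hy as [u [a [Hu' [Ha Hw']]]].
      exists u, (S a). split; auto. split; [lia|]. econstructor; eauto.
    + apply IH; auto.
Qed.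

Lemma D_cover {V} (adj : V -> V -> Prop) (reps : list V) r :
  connected V adj -> In r reps ->
  (forall v, exists r' f, In r' reps /\ automorphism V adj f /\ f r' = v) ->
  forall j, (forall v, Dj adj r j v) \/ (S j <= length (sub_list (Dj adj r j) reps))%nat.
Proof.
  intros [_ Hc] Hr Hq. induction j.
  - right. assert (H0 : Dj adj r 0 r).
    { exists r, 0%nat. split. exists (fun x => x); split; [apply aut_id|reflexivity].
      split; [lia|constructor]. }
    pose proof (sub_strict (fun _ => False) (Dj adj r 0) reps r) as Hs.
    assert (length (sub_list (fun _ : V => False) reps) < length (sub_list (Dj adj r 0) reps))%nat
      by (apply Hs; auto; contradiction).
    eapply Nat.le_trans; [|exact H]. apply le_n_S, Nat.le_0_l.
  - destruct IHj as [Hall|Hcnt].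
    + left; intros v. destruct (Hall v) as [u [a [Hu [Ha Hw]]]]. exists u, a; split; auto.
    + destruct (classic (forall v, Dj adj r (S j) v)) as [Hall|Hn]; [left; auto|right].
      apply not_all_ex_not in Hn. destruct Hn as [w Hw].
      assert (Hw' : ~ Dj adj r j w).
      { intros [u [a [Hu [Ha Hwk]]]]. apply Hw. exists u, a. split; auto. }
      destruct (Hc w r) as [m Hm].
      assert (Hor : orb adj r r) by (exists (fun x => x); split; [apply aut_id|reflexivity]).
      destruct (find_new adj r j w r m Hm Hor Hw') as [v [Hv1 Hv2]].
      destruct (Hq v) as [r' [f [Hr' [Hf Hfr]]]].
      destruct (aut_inv _ _ _ Hf) as [g [Hg [Hgf _]]].
      assert (Hmono : forall x, Dj adj r j x -> Dj adj r (S j) x).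
      { intros x [u [a [Hu [Ha Hwk]]]]. exists u, a. split; auto. }
      assert (length (sub_list (Dj adj r j) reps) < length (sub_list (Dj adj r (S j)) reps))%nat.
      { apply (sub_strict _ _ _ r'); auto.
        - rewrite <- (Hgf r'). rewrite Hfr. apply Dj_aut; auto.
        - intros H. apply Hv2. rewrite <- Hfr. apply Dj_aut; auto. }
      lia.
Qed.

Lemma near_all {V} (adj : V -> V -> Prop) (reps : list V) r n :
  connected V adj -> In r reps -> (length reps <= n)%nat -> (1 <= n)%nat ->
  (forall v, exists r' f, In r' reps /\ automorphism V adj f /\ f r' = v) ->
  forall v, Dj adj r (n-1) v.
Proof.
  intros Hc Hr Hl Hn Hq. destruct (D_cover adj reps r Hc Hr Hq (n-1)) as [H|H]; auto.
  pose proof (sub_list_len (Dj adj r (n-1)) reps).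
  assert (Heq : length (sub_list (Dj adj r (n-1)) reps) = length reps) by lia.
  intros v. destruct (Hq v) as [r' [f [Hr' [Hf <-]]]].
  apply Dj_aut; auto. eapply sub_full; eauto.
Qed.

Definition Vs {V} (adj : V -> V -> Prop) (r : V) := {v : V | orb adj r v}.
Definition adjs {V} (adj : V -> V -> Prop) (r : V) (n : nat) (p q : Vs adj r) : Prop :=
  proj1_sig p <> proj1_sig q /\
  exists m, (m <= 2*n)%nat /\ walk adj (proj1_sig p) (proj1_sig q) m.

Lemma shadow {V} (adj : V -> V -> Prop) r n :
  (forall a b, adj a b -> adj b a) -> (1 <= n)%nat ->
  (forall v, exists p : Vs adj r, exists a, (a <= n-1)%nat /\ walk adj (proj1_sig p) v a) ->
  forall v y m, walk adj v y m -> forall qy : Vs adj r, proj1_sig qy = y ->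
  forall p : Vs adj r, (exists a, (a <= n-1)%nat /\ walk adj (proj1_sig p) v a) ->
  (m = 0%nat -> proj1_sig p = y) ->
  exists m', (m' <= m)%nat /\ walk (adjs adj r n) p qy m'.
Proof.
  intros Hs Hn Hnear v y m Hw. induction Hw as [x|x y z m Hxy Hw IH];
    intros qy Hqy p Hp Hm0.
  - exists 0%nat. split; [lia|]. replace p with qy; [constructor|].
    apply sig_ext. rewrite Hqy, Hm0; auto.
  - assert (Hp1 : exists p1 : Vs adj r, (exists a, (a <= n-1)%nat /\ walk adj (proj1_sig p1) y a)
                  /\ (m = 0%nat -> proj1_sig p1 = z)).
    { destruct m as [|m].
      - assert (Hyz : y = z) by (inversion Hw; auto). subst y. exists qy. split; [exists 0%nat; split; [lia|]|intros; auto].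
        rewrite Hqy; constructor.
      - destruct (Hnear y) as [p1 Hp1]. exists p1. split; auto. intros; lia. }
    destruct Hp1 as [p1 [[a1 [Ha1 Hw1]] Hp1z]].
    destruct (IH qy Hqy p1 (ex_intro _ a1 (conj Ha1 Hw1)) Hp1z) as [m1 [Hm1 Hw']].
    destruct (classic (proj1_sig p = proj1_sig p1)) as [He|Hne].
    + apply sig_ext in He. subst p1. exists m1. split; [lia|auto].
    + exists (S m1). split; [lia|]. apply walkS with p1; auto.
      split; auto. destruct Hp as [a [Ha Hwa]].
      exists (a + (1 + a1))%nat. split; [lia|].
      eapply walk_app; [exact Hwa|]. apply walkS with y; auto.
      apply walk_rev; auto.
Qed.

Lemma shadow_main {V} (adj : V -> V -> Prop) r n :
  (forall a b, adj a b -> adj b a) -> (1 <= n)%nat ->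
  (forall v, exists p : Vs adj r, exists a, (a <= n-1)%nat /\ walk adj (proj1_sig p) v a) ->
  forall (p q : Vs adj r) m, walk adj (proj1_sig p) (proj1_sig q) m ->
  exists m', (m' <= m)%nat /\ walk (adjs adj r n) p q m'.
Proof.
  intros Hs Hn Hnear p q m Hw. eapply shadow; eauto.
  exists 0%nat. split; [lia|constructor].
  intros ->. inversion Hw; auto.
Qed.

Lemma unshadow {V} (adj : V -> V -> Prop) r n :
  forall (p q : Vs adj r) m, walk (adjs adj r n) p q m ->
  exists m2, (m2 <= 2*n*m)%nat /\ walk adj (proj1_sig p) (proj1_sig q) m2.
Proof.
  induction 1 as [x|x y z m [_ [m0 [Hm0 Hw0]]] Hw IH].
  - exists 0%nat; split; [lia|constructor].
  - destruct IH as [m2 [Hm2 Hw2]]. exists (m0 + m2)%nat. split; [nia|].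
    eapply walk_app; eauto.
Qed.

Theorem proposition2p11 (n k : nat) (V : Type) (adj : V -> V -> Prop) :
  simple_graph V adj -> connected V adj -> quasitransitive V adj n ->
  max_degree_le V adj k ->
  exists (V' : Type) (adj' : V' -> V' -> Prop) (phi : V' -> V),
    simple_graph V' adj' /\ connected V' adj' /\ vertex_transitive V' adj' /\
    max_degree_le V' adj' ((k + 1) ^ (2 * n))%nat /\
    diam_le V' adj' V adj /\
    (forall x y, phi x = phi y -> x = y) /\
    rough_isometry V' adj' V adj (INR (2 * n)) (INR n) phi /\
    (forall N : nat, has_card V N ->
       exists N' : nat, has_card V' N' /\
         INR N / INR n <= INR N' /\ (N' <= N)%nat).
Proof.
  intros [Hsym Hirr] Hc [reps [Hlen Hcov]] Hdeg.
  destruct Hc as [[v0] Hcw] eqn:Hceq. clear Hceq.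
  destruct (Hcov v0) as [r0 [f0 [Hr0 _]]].
  assert (Hn : (1 <= n)%nat).
  { destruct reps; [contradiction|]. simpl in Hlen. lia. }
  assert (Hne : reps <> []) by (intros ->; contradiction).
  assert (Hr : exists r, In r reps /\ forall N, has_card V N -> exists N',
     has_card (Vs adj r) N' /\ (N <= n*N')%nat /\ (N' <= N)%nat).
  { destruct (classic (exists N, has_card V N)) as [[N0 [l0 [Hnd0 [Hf0 Hl0]]]]|Hinf].
    - destruct (list_sum_le_max (fun r => length (sub_list (orb adj r) l0)) reps Hne)
        as [r [Hr Hsum]].
      assert (Hcc := count_cover (orb adj) reps l0).
      assert (Hcc' : (length l0 <= list_sum (map (fun r => length (sub_list (orb adj r) l0)) reps))%nat).
      { apply Hcc. intros x _. destruct (Hcov x) as [r' [f [Hr' [Hf Hfx]]]].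
        exists r'. split; auto. exists f; auto. }
      exists r. split; auto. intros N [l [Hnd [Hf Hl]]].
      exists (length (sub_list (orb adj r) l)). split.
      + exists (sub_list (orb adj r) l). split; [apply sub_list_nodup; auto|].
        split; auto. intros x. apply sub_list_in. apply Hf.
      + assert (E1 : length l = length l0) by (apply card_uniq; auto).
        assert (E2 : length (sub_list (orb adj r) l) = length (sub_list (orb adj r) l0)).
        { apply card_uniq; try apply sub_list_nodup; auto; intros x; apply sub_list_in; auto. }
        pose proof (sub_list_len (orb adj r) l) as E3.
        set (a := length (sub_list (orb adj r) l)) in *.
        set (b := length (sub_list (orb adj r) l0)) in *.
        set (s := list_sum (map (fun r => length (sub_list (orb adj r) l0)) reps)) in *.
        simpl in Hsum. fold b in Hsum. split; nia.
    - exists r0. split; auto. intros N HN. exfalso; eauto. }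
  destruct Hr as [r [Hr Hfin]].
  assert (Hnear : forall v, exists p : Vs adj r, exists a, (a <= n-1)%nat /\ walk adj (proj1_sig p) v a).
  { intros v. destruct (near_all adj reps r n (conj (inhabits v0) Hcw) Hr Hlen Hn Hcov v)
      as [u [a [Hu [Ha Hw]]]].
    exists (exist _ u Hu), a. split; auto. apply walk_rev; auto. }
  assert (Hnb : exists nb : V -> list V, forall v, (length (nb v) <= k)%nat /\
                 forall w, adj v w -> In w (nb v)).
  { exists (fun v => proj1_sig (constructive_indefinite_description _ (Hdeg v))).
    intros v. destruct (constructive_indefinite_description _ (Hdeg v)) as [l Hl]. exact Hl. }
  destruct Hnb as [nb Hnb].
  assert (Hconn : connected (Vs adj r) (adjs adj r n)).
  { split. constructor. exists r, (fun x => x). split; [apply aut_id|reflexivity].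
    intros p q. destruct (Hcw (proj1_sig p) (proj1_sig q)) as [m Hm].
    destruct (shadow_main adj r n Hsym Hn Hnear p q m Hm) as [m' [_ Hw']]. eauto. }
  assert (Hdd : forall p q : Vs adj r,
    (gdist (adjs adj r n) p q <= gdist adj (proj1_sig p) (proj1_sig q))%nat).
  { intros p q. destruct (Hcw (proj1_sig p) (proj1_sig q)) as [m0 Hw0].
    destruct (gdist_spec adj _ _ _ Hw0) as [Hwd _].
    destruct (shadow_main adj r n Hsym Hn Hnear p q _ Hwd) as [m' [Hm' Hw']].
    destruct (gdist_spec _ _ _ _ Hw') as [_ Hle]. lia. }
  assert (Hd2 : forall p q : Vs adj r,
    (gdist adj (proj1_sig p) (proj1_sig q) <= 2*n*gdist (adjs adj r n) p q)%nat).
  { intros p q. destruct (Hconn) as [_ Hc']. destruct (Hc' p q) as [m0 Hw0].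
    destruct (gdist_spec _ _ _ _ Hw0) as [Hwd _].
    destruct (unshadow adj r n p q _ Hwd) as [m2 [Hm2 Hw2]].
    destruct (gdist_spec _ _ _ _ Hw2) as [_ Hle]. lia. }
  exists (Vs adj r), (adjs adj r n), (@proj1_sig V (orb adj r)).
  split.
  { split.
    - intros p q [Hne' [m [Hm Hw]]]. split; [auto|]. exists m. split; auto. apply walk_rev; auto.
    - intros p [H _]. apply H; auto. }
  split; [exact Hconn|].
  split.
  { intros p q. destruct p as [x Hx], q as [y Hy].
    pose proof Hx as Hx'. pose proof Hy as Hy'.
    destruct Hx' as [f [Hf Hfx]], Hy' as [g [Hg Hgy]].
    destruct (aut_inv _ _ _ Hf) as [fi [Hfi [Hfif Hffi]]].
    destruct (aut_inv _ _ _ Hg) as [gi [Hgi [Hgig Hggi]]].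
    pose (h := fun v => g (fi v)). pose (hi := fun v => f (gi v)).
    assert (Hh : automorphism V adj h) by (unfold h; apply (aut_comp V adj g fi); assumption).
    assert (Hhi : automorphism V adj hi) by (unfold hi; apply (aut_comp V adj f gi); assumption).
    assert (Hhh : forall v, hi (h v) = v) by (intros v; unfold h, hi; rewrite Hgig, Hffi; auto).
    assert (Hhh' : forall v, h (hi v) = v) by (intros v; unfold h, hi; rewrite Hfif, Hggi; auto).
    exists (fun s : Vs adj r => exist (orb adj r) (h (proj1_sig s)) (orb_aut adj r h _ Hh (proj2_sig s))).
    split.
    - split.
      + exists (fun s : Vs adj r => exist (orb adj r) (hi (proj1_sig s)) (orb_aut adj r hi _ Hhi (proj2_sig s))).
        split; intros s; apply sig_ext; simpl; auto.
      + intros s t. unfold adjs; simpl. split.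
        * intros [Hne' [m [Hm Hw]]]. split.
          -- intros Heq. apply Hne'. rewrite <- (Hhh (proj1_sig s)), Heq, Hhh; auto.
          -- exists m. split; auto. apply walk_aut; auto.
        * intros [Hne' [m [Hm Hw]]]. split.
          -- intros Heq. apply Hne'. rewrite Heq; auto.
          -- exists m. split; auto. apply (walk_aut_iff _ h); auto.
    - apply sig_ext; simpl. unfold h. rewrite <- Hfx, Hfif; auto. }
  split.
  { intros p. exists (sub_list (orb adj r) (ball nb (2*n) (proj1_sig p))). split.
    - eapply Nat.le_trans; [apply sub_list_len|]. apply ball_len. intros v; apply Hnb.
    - intros q [_ [m [Hm Hw]]]. apply sub_list_in. eapply ball_in; eauto.
      intros v w; apply Hnb. }
  split.
  { intros m Hm p q. specialize (Hm (proj1_sig p) (proj1_sig q)). specialize (Hdd p q). lia. }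
  split; [intros x y; apply sig_ext|].
  split.
  { split.
    - intros p q. specialize (Hdd p q). specialize (Hd2 p q).
      set (d' := gdist (adjs adj r n) p q) in *.
      set (d := gdist adj (proj1_sig p) (proj1_sig q)) in *.
      assert (R1 : INR d' <= INR d) by (apply le_INR; auto).
      assert (R2 : INR d <= INR (2*n) * INR d') by (rewrite <- mult_INR; apply le_INR; auto).
      assert (R3 : 1 <= INR (2*n)) by (replace 1 with (INR 1) by reflexivity; apply le_INR; lia).
      assert (R4 : 0 < / INR (2*n) <= 1).
      { split. apply Rinv_0_lt_compat; lra. rewrite <- Rinv_1. apply Rinv_le_contravar; lra. }
      pose proof (pos_INR d'). pose proof (pos_INR n).
      split; nra.
    - intros y. destruct (Hnear y) as [p [a [Ha Hw]]]. exists p.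
      destruct (gdist_spec _ _ _ _ Hw) as [_ Hle]. apply le_INR; eapply Nat.le_trans; [exact Hle|]; lia. }
  intros N HN. destruct (Hfin N HN) as [N' [HN' [H1 H2]]]. exists N'.
  split; auto. split; auto.
  assert (R1 : INR N <= INR n * INR N') by (rewrite <- mult_INR; apply le_INR; auto).
  assert (R2 : 0 < INR n) by (apply lt_0_INR; lia).
  unfold Rdiv. apply Rmult_le_reg_r with (INR n); auto.
  rewrite Rmult_assoc, Rinv_l by lra. nra.
Qed.
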